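(* Let $n\ge 3$. For each positive integer $m$ and each $1\le i<j\le n$, we have $A_{i,j}^m\in B_n[2m]$, where $A_{i,j}=\sigma_{j-1}\sigma_{j-2}\cdots\sigma_{i+1}\sigma_i^2\sigma_{i+1}^{-1}\cdots\sigma_{j-2}^{-1}\sigma_{j-1}^{-1}$.
   Context: $B_n$ denotes the braid group on $n$ strands with standard Artin generators $\sigma_1,\dots,\sigma_{n-1}$ (the elements $A_{i,j}$ are the standard generators of the pure braid group $PB_n$). The reduced integral Burau representation $\rho_{-1}: B_n \to GL(n-1,\mathbb{Z})$ is defined on generators by $\rho_{-1}(\sigma_1)=\begin{pmatrix}1&0\\1&1\end{pmatrix}\oplus \mathrm{Id}_{n-3}$, $\rho_{-1}(\sigma_{n-1})=\mathrm{Id}_{n-3}\oplus\begin{pmatrix}1&-1\\0&1\end{pmatrix}$, and for $1<i<n-1$, $\rho_{-1}(\sigma_i)=\mathrm{Id}_{i-2}\oplus\begin{pmatrix}1&-1&0\\0&1&0\\0&1&1\end{pmatrix}\oplus \mathrm{Id}_{n-i-2}$, where $\oplus$ denotes block-diagonal sum. For a positive integer $\ell$, let $r_\ell: GL(n-1,\mathbb{Z})\to GL(n-1,\mathbb{Z}/\ell\mathbb{Z})$ be entrywise reduction mod $\ell$. The level $\ell$ congruence subgroup of the braid group is $B_n[\ell] := \ker(r_\ell\circ\rho_{-1})$. *)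

(* Defs.v *)
From mathcomp Require Import all_boot all_order all_algebra.
Set Implicit Arguments. Unset Strict Implicit. Unset Printing Implicit Defensive.
Import Order.TTheory GRing.Theory Num.Theory.
Local Open Scope ring_scope.

(* A braid word: a list of letters (i, b) standing for sigma_i (b = true)
   or sigma_i^{-1} (b = false), with 1 <= i <= n-1. *)
Definition letter := (nat * bool)%type.
Definition sig (i : nat) : letter := (i, true).
Definition sigi (i : nat) : letter := (i, false).

(* Reduced integral Burau matrix rho_{-1}(sigma_i) in GL(n-1, Z), written out
   entrywise (0-indexed rows r and columns c, i is 1-indexed as in the paper):
   - i = 1     : Id + E_{1,0}                      (block [[1,0],[1,1]] at rows 0,1)
   - i = n-1   : Id - E_{n-3,n-2}                  (block [[1,-1],[0,1]] at rows n-3,n-2)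
   - 1<i<n-1   : Id - E_{i-2,i-1} + E_{i,i-1}       (block [[1,-1,0],[0,1,0],[0,1,1]]
                                                    at rows i-2, i-1, i). *)
Definition burau_gen (n i : nat) : 'M[int]_(n.-1) :=
  \matrix_(r < n.-1, c < n.-1)
    if i == 1%N then
      ((val r == val c)%:Z + ((val r == 1%N) && (val c == 0%N))%:Z)
    else if i == n.-1 then
      ((val r == val c)%:Z - ((val r == (n - 3)%N) && (val c == (n - 2)%N))%:Z)
    else
      ((val r == val c)%:Z - ((val r == (i - 2)%N) && (val c == (i - 1)%N))%:Z
                   + ((val r == i) && (val c == (i - 1)%N))%:Z).

Definition burau_letter (n : nat) (l : letter) : 'M[int]_(n.-1) :=
  if l.2 then burau_gen n l.1 else invmx (burau_gen n l.1).

Definition burau (n : nat) (w : seq letter) : 'M[int]_(n.-1) :=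
  foldr (fun l M => burau_letter n l *m M) 1%:M w.

(* The braid represented by w lies in B_n[l] = ker (r_l o rho_{-1}):
   rho_{-1}(w) is congruent to the identity entrywise modulo l. *)
Definition in_congruence_subgroup (n l : nat) (w : seq letter) : Prop :=
  forall r c : 'I_(n.-1), (burau n w r c = (1%:M : 'M[int]_(n.-1)) r c %[mod l%:Z])%Z.

Definition A_word (i j : nat) : seq letter :=
  [seq sig k | k <- rev (iota i.+1 (j - i.+1))]
  ++ [:: sig i; sig i]
  ++ [seq sigi k | k <- iota i.+1 (j - i.+1)].

Definition word_pow (w : seq letter) (m : nat) : seq letter := flatten (nseq m w).

Example burau_gen_check3 :
  burau_gen 4 2 = \matrix_(r < 3, c < 3)
    (nth 0 (nth [::] [:: [:: 1; -1; 0]; [:: 0; 1; 0]; [:: 0; 1; 1]] r) c).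
Proof. by apply/matrixP=> r c; rewrite !mxE; case: r => [[|[|[|]]] ?]; case: c => [[|[|[|]]] ?]. Qed.
Example A_word_check : A_word 1 4 = [:: sig 3; sig 2; sig 1; sig 1; sigi 2; sigi 3].
Proof. by []. Qed.

(* Main.v *)
Require Import Defs.
From mathcomp Require Import all_boot all_order all_algebra.
From mathcomp Require Import zify.
Set Implicit Arguments. Unset Strict Implicit. Unset Printing Implicit Defensive.
Import Order.TTheory GRing.Theory Num.Theory.

Local Open Scope ring_scope.

Lemma burau_cat n (a b : seq letter) : burau n (a ++ b) = burau n a *m burau n b.
Proof.
elim: a => [|l a IH] /=; first by rewrite /burau /= mul1mx.
by rewrite /burau /= -/(burau n (a ++ b)) IH mulmxA.
Qed.

Lemma sq0 d (N : 'M[int]_d) (P : pred nat) (c0 : nat) :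
  (forall r c, N r c != 0 -> val c = c0 /\ P (val r)) -> ~~ P c0 -> N *m N = 0.
Proof.
move=> H nP; apply/matrixP => r c; rewrite !mxE.
apply: big1 => l _.
have [Hz|Hnz] := eqVneq (N r l) 0; first by rewrite Hz mul0r.
have [Hz'|Hnz'] := eqVneq (N l c) 0; first by rewrite Hz' mulr0.
case: (H _ _ Hnz) => e _; case: (H _ _ Hnz') => _ p.
by move: p; rewrite e (negbTE nP).
Qed.

Lemma gen_sq0 n k : (3 <= n)%N -> (1 <= k)%N -> (k <= n.-1)%N ->
  let N := burau_gen n k - 1%:M in N *m N = 0.
Proof.
move=> hn hk1 hkn N.
apply: (@sq0 _ N
   (fun r => if k == 1%N then r == 1%N else if k == n.-1 then r == (n-3)%N
             else (r == (k-2)%N) || (r == k))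
   (if k == 1%N then 0%N else if k == n.-1 then (n-2)%N else (k-1)%N)).
- move=> r c; rewrite /N /burau_gen !mxE.
  have -> : (r == c) = (val r == val c) by [].
  move: (val r) (val c) => a b.
  case: (k == 1%N).
    by case: (a =P b) => ?; case: (a =P 1%N) => ?; case: (b =P 0%N) => ?.
  case: (k == n.-1).
    by case: (a =P b) => ?; case: (a =P (n-3)%N) => ?; case: (b =P (n-2)%N) => ?.
  by case: (a =P b) => ?; case: (a =P (k-2)%N) => ?; case: (b =P (k-1)%N) => ?;
     case: (a =P k) => ?.
- clear N; move: hk1 hkn.
  repeat (case: ifP => /eqP ? //); move=> h1 h2; apply/negP;
    rewrite ?negb_or; try (move => /orP [] /eqP); try (move=> /eqP); lia.
Qed.

Lemma gen_unit n k : (3 <= n)%N -> (1 <= k)%N -> (k <= n.-1)%N ->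
  burau_gen n k \in unitmx.
Proof.
move=> hn hk1 hkn.
have NN := gen_sq0 hn hk1 hkn; move: NN.
set N := burau_gen n k - 1%:M => NN.
have eG : burau_gen n k = 1%:M + N by rewrite /N addrCA subrr addr0.
suff H : burau_gen n k *m (1%:M - N) = 1%:M by case: (mulmx1_unit H).
rewrite eG mulmxDl mul1mx mulmxBr mulmx1 NN subr0 subrK //.
Qed.

Lemma PQ1 n (s : seq nat) : (3 <= n)%N -> all (fun k => (1 <= k <= n.-1)%N) s ->
  burau n [seq sig k | k <- rev s] *m burau n [seq sigi k | k <- s] = 1%:M.
Proof.
move=> hn; elim: s => [|x s IH] /=; first by rewrite /burau /= mulmx1.
case/andP => /andP [h1 h2] hs.
rewrite rev_cons map_rcons -cats1 burau_cat.
rewrite /burau /= -/(burau n _) /burau_letter /= mulmx1.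
rewrite -mulmxA (mulmxA (burau_gen n x)) mulmxV ?mul1mx ?IH //.
exact: gen_unit.
Qed.

Lemma pow_lemma n (w : seq letter) (K : 'M[int]_(n.-1)) :
  burau n w = 1%:M + 2%:Z *: K -> K *m K = 0 ->
  forall m, burau n (word_pow w m) = 1%:M + (2 * m)%N%:Z *: K.
Proof.
move=> Hw KK; elim => [|m IH].
  by rewrite /word_pow /= /burau /= scale0r addr0.
rewrite /word_pow /= burau_cat -/(word_pow w m) IH Hw.
rewrite mulmxDl mul1mx mulmxDr mulmx1 -scalemxAl -scalemxAr KK !scaler0 addr0.
rewrite -addrA -scalerDl; congr (_ + _ *: _).
rewrite mulnS; lia.
Qed.

Theorem corollary2p5 (n : nat) (hn : (3 <= n)%N) (m : nat) (hm : (0 < m)%N)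
  (i j : nat) (hi : (1 <= i)%N) (hij : (i < j)%N) (hjn : (j <= n)%N) :
  in_congruence_subgroup n (2 * m) (word_pow (A_word i j) m).
Proof.
set s := iota i.+1 (j - i.+1).
have hs : all (fun k => (1 <= k <= n.-1)%N) s.
  by apply/allP => k; rewrite mem_iota => /andP [h1 h2]; apply/andP; split; lia.
have PQ := PQ1 hn hs.
have QP := mulmx1C PQ.
have hi1 : (i <= n.-1)%N by lia.
set N := burau_gen n i - 1%:M.
have NN : N *m N = 0 by exact: (gen_sq0 hn hi hi1).
have eG : burau_gen n i = 1%:M + N by rewrite /N addrCA subrr addr0.
clearbody N.
set P := burau n [seq sig k | k <- rev s] in PQ QP.
set Q := burau n [seq sigi k | k <- s] in PQ QP.
have HA : burau n (A_word i j) = 1%:M + 2%:Z *: (P *m N *m Q).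
  rewrite /A_word -/s !burau_cat -/P -/Q.
  rewrite {1}/burau /= /burau_letter /= mulmx1 !eG.
  rewrite mulmxDl mul1mx mulmxDr mulmx1 NN addr0.
  have -> : 1%:M + N + N = 1%:M + 2%:Z *: N.
    by rewrite -addrA; congr (_ + _); rewrite -mulr2n -scaler_nat.
  by rewrite mulmxDl mul1mx mulmxDr PQ -scalemxAl -scalemxAr mulmxA.
have KK : (P *m N *m Q) *m (P *m N *m Q) = 0.
  by rewrite -!mulmxA (mulmxA Q) QP mul1mx (mulmxA N) NN !mul0mx mulmx0.
have Hp := pow_lemma HA KK m.
move=> r c; rewrite Hp !mxE.
by rewrite addrC mulrC modzMDl.
Qed.
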